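(* Fix a dimension $D\geqslant 2$. There is a constant $C>0$ (depending only on $D$) such that for every integer $n\geqslant 2$, every real $s$, and every integer $k$ with $0\leqslant k<n$, $$\delta(n,s,k)\leqslant C\,\frac{s}{(k+1)^{1/D}},$$ i.e. $\delta(n,s,k)=O\big(s/(k+1)^{1/D}\big)$.
   Context: For a graph $G$ whose vertices are points in $\mathbb{R}^D$, each edge $(u,v)$ has weight equal to the Euclidean distance $d(u,v)$ (edges may cross or overlap), and $d_G(u,v)$ is the length of a shortest path in $G$ between $u$ and $v$. The dilation of $G$ is $\Delta(G)=\max_{u\neq v\in V(G)} d_G(u,v)/d(u,v)$. For a finite set $S$ of $n$ points and an integer $k\ge0$, $\Delta(S,k)$ is the minimum of $\Delta(G)$ over all graphs $G$ with vertex set exactly $S$ and exactly $n-1+k$ edges. The spread $s(S)$ of a finite point set $S$ with $|S|\ge2$ is the ratio of the largest to the smallest pairwise Euclidean distance in $S$. $\delta(n,s,k)=\sup\{\Delta(S,k): S\subset\mathbb{R}^D,\ |S|=n,\ s(S)\leqslant s\}$. *)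

(* Defs.v *)
From Stdlib Require Import Reals List Lia.
Import ListNotations.
Open Scope R_scope.

(* A point of R^D is represented by its coordinate function; only the
   coordinates 0..D-1 are used. *)
Definition point := nat -> R.

Fixpoint sqsum (D : nat) (x y : point) : R :=
  match D with
  | O => 0
  | S d => sqsum d x y + (x d - y d) ^ 2
  end.

Definition dist (D : nat) (x y : point) : R := sqrt (sqsum D x y).

(* A set S of n points is given as an injective enumeration P 0, ..., P (n-1). *)
Definition distinct_points (n : nat) (P : nat -> point) : Prop :=
  forall i j, (i < n)%nat -> (j < n)%nat -> i <> j -> P i <> P j.

(* Spread: s(S) <= s, i.e. max pairwise distance <= s * min pairwise distance. *)
Definition spread_le (D n : nat) (P : nat -> point) (s : R) : Prop :=
  forall i j l m, (i < n)%nat -> (j < n)%nat -> (l < n)%nat -> (m < n)%nat ->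
    i <> j -> l <> m -> dist D (P i) (P j) <= s * dist D (P l) (P m).

(* A graph on vertex set {P 0,...,P (n-1)}: a list of edges (pairs of distinct
   vertex indices); the number of edges is the length of the list. *)
Definition graph_wf (n : nat) (E : list (nat * nat)) : Prop :=
  forall e, In e E -> (fst e < n)%nat /\ (snd e < n)%nat /\ fst e <> snd e.

Fixpoint walk_ok (E : list (nat * nat)) (w : list nat) : Prop :=
  match w with
  | a :: ((b :: _) as t) => (In (a, b) E \/ In (b, a) E) /\ walk_ok E t
  | _ => True
  end.

Fixpoint walk_len (D : nat) (P : nat -> point) (w : list nat) : R :=
  match w with
  | a :: ((b :: _) as t) => dist D (P a) (P b) + walk_len D P t
  | _ => 0
  end.

Definition dilation_le (D n : nat) (P : nat -> point) (E : list (nat * nat))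
    (t : R) : Prop :=
  forall u v, (u < n)%nat -> (v < n)%nat -> u <> v ->
    exists rest, walk_ok E (u :: rest) /\ last (u :: rest) u = v /\
      walk_len D P (u :: rest) <= t * dist D (P u) (P v).

Definition Delta_le (D n : nat) (P : nat -> point) (k : nat) (t : R) : Prop :=
  exists E, length E = (n - 1 + k)%nat /\ graph_wf n E /\ dilation_le D n P E t.

(* Main.v *)
Require Import Defs.
From Stdlib Require Import Reals List Lra Lia Psatz Bool ZArith.
Import ListNotations.
Open Scope R_scope.

Fixpoint ss (D : nat) (x : nat -> R) : R :=
  match D with O => 0 | S d => ss d x + (x d)^2 end.
Definition nrm D x := sqrt (ss D x).
Definition vsub (p q : point) : nat -> R := fun i => p i - q i.

Lemma sqsum_ss (D : nat) (p q : point) : sqsum D p q = ss D (vsub p q).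
Proof. induction D; simpl; auto. rewrite IHD; reflexivity. Qed.
Lemma dist_nrm (D : nat) (p q : point) : Defs.dist D p q = nrm D (vsub p q).
Proof. unfold Defs.dist, nrm. rewrite sqsum_ss. auto. Qed.

Lemma ss_nonneg (D : nat) x : 0 <= ss D x.
Proof. induction D; simpl; nra. Qed.

Lemma nrm_nonneg (D : nat) x : 0 <= nrm D x.
Proof. apply sqrt_pos. Qed.

Lemma ss_ext (D : nat) x y : (forall t, (t < D)%nat -> x t = y t) -> ss D x = ss D y.
Proof. induction D; intros H; simpl; auto. rewrite IHD by (intros; apply H; lia).
  rewrite H by lia. auto. Qed.

Lemma nrm_ext (D : nat) x y : (forall t, (t < D)%nat -> x t = y t) -> nrm D x = nrm D y.
Proof. intros; unfold nrm; rewrite (ss_ext D x y); auto. Qed.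

Lemma ss_scale (D : nat) c x : ss D (fun i => c * x i) = c^2 * ss D x.
Proof. induction D; simpl; [ring|]. rewrite IHD. ring. Qed.

Lemma nrm_scale (D : nat) c x : nrm D (fun i => c * x i) = Rabs c * nrm D x.
Proof. unfold nrm. rewrite ss_scale. rewrite sqrt_mult_alt.
  - f_equal. rewrite <- sqrt_Rsqr_abs. f_equal. unfold Rsqr; ring.
  - nra.
Qed.

Lemma sq_le_le (x y : R) : 0 <= y -> x^2 <= y^2 -> x <= y.
Proof. intros Hy H. destruct (Rle_or_lt x y) as [|Hl]; auto.
  assert (y * y < x * x) by (apply Rmult_le_0_lt_compat; lra). nra. Qed.

Lemma nrm_triangle (D : nat) x y : nrm D (fun i => x i + y i) <= nrm D x + nrm D y.
Proof.
  unfold nrm. induction D; simpl.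
  - rewrite sqrt_0. lra.
  - set (A := ss D x) in *. set (B := ss D y) in *. set (Cc := ss D (fun i => x i + y i)) in *.
    assert (HA : 0 <= A) by apply ss_nonneg.
    assert (HB : 0 <= B) by apply ss_nonneg.
    assert (HC : 0 <= Cc) by apply ss_nonneg.
    set (p := sqrt A) in *. set (q := sqrt B) in *.
    assert (Hp : 0 <= p) by apply sqrt_pos. assert (Hq : 0 <= q) by apply sqrt_pos.
    assert (Hp2 : p * p = A) by (apply sqrt_sqrt; auto).
    assert (Hq2 : q * q = B) by (apply sqrt_sqrt; auto).
    assert (Hc2 : Cc <= (p + q) * (p + q)).
    { rewrite <- (sqrt_sqrt Cc) by auto. apply Rmult_le_compat; auto using sqrt_pos. }
    set (a := x D) in *. set (b := y D) in *.
    change (sqrt (Cc + (a + b)^2) <= sqrt (A + a^2) + sqrt (B + b^2)).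
    assert (HPa : 0 <= A + a^2) by nra. assert (HQb : 0 <= B + b^2) by nra.
    set (P := sqrt (A + a^2)). set (Q := sqrt (B + b^2)).
    assert (HP : 0 <= P) by apply sqrt_pos. assert (HQ : 0 <= Q) by apply sqrt_pos.
    assert (HP2 : P * P = A + a^2) by (apply sqrt_sqrt; auto).
    assert (HQ2 : Q * Q = B + b^2) by (apply sqrt_sqrt; auto).
    assert (Hkey : p * q + a * b <= P * Q).
    { destruct (Rle_or_lt (p*q + a*b) 0) as [H0|H0]. nra.
      assert ((p*q+a*b)^2 <= (P*Q)^2).
      { replace ((P*Q)^2) with ((P*P)*(Q*Q)) by ring. rewrite HP2, HQ2.
        rewrite <- Hp2, <- Hq2. assert (0 <= (p*b - q*a)^2) by apply pow2_ge_0. nra. }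
      apply sq_le_le; auto. nra. }
    rewrite <- (sqrt_square (P + Q)) by lra.
    clearbody P Q a b p q A B Cc. apply sqrt_le_1; [pose proof (pow2_ge_0 (a+b)); lra|apply Rmult_le_pos; lra|].
    replace ((P+Q)*(P+Q)) with (P*P + Q*Q + 2*(P*Q)) by ring.
    replace ((p+q)*(p+q)) with (p*p + q*q + 2*(p*q)) in Hc2 by ring.
    replace ((a+b)^2) with (a^2 + b^2 + 2*(a*b)) by ring.
    rewrite HP2, HQ2. rewrite Hp2, Hq2 in Hc2. lra.
Qed.

Lemma dd_sym (D : nat) p q : Defs.dist D p q = Defs.dist D q p.
Proof. rewrite !dist_nrm. replace (nrm D (vsub q p)) with (Rabs (- (1)) * nrm D (vsub q p)).
  rewrite <- nrm_scale. apply nrm_ext. intros. unfold vsub. ring.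
  rewrite Rabs_Ropp, Rabs_R1. ring. Qed.

Lemma dd_tri (D : nat) p q r : Defs.dist D p r <= Defs.dist D p q + Defs.dist D q r.
Proof. rewrite !dist_nrm. eapply Rle_trans; [|apply nrm_triangle].
  right. apply nrm_ext. intros. unfold vsub. ring. Qed.

Lemma dd_nonneg (D : nat) p q : 0 <= Defs.dist D p q.
Proof. apply sqrt_pos. Qed.

Lemma ss_coord (D : nat) x t : (t < D)%nat -> (x t)^2 <= ss D x.
Proof. induction D; intros H; simpl. lia.
  destruct (Nat.eq_dec t D). subst. pose proof (ss_nonneg D x). lra.
  pose proof (IHD ltac:(lia)). pose proof (pow2_ge_0 (x D)). lra. Qed.

Lemma coord_le (D : nat) x t : (t < D)%nat -> Rabs (x t) <= nrm D x.
Proof. intros H. unfold nrm. rewrite <- sqrt_Rsqr_abs. apply sqrt_le_1.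
  apply Rle_0_sqr. apply ss_nonneg. unfold Rsqr. pose proof (ss_coord D x t H). simpl in H0. lra. Qed.

Lemma ss_bound (D : nat) x e : (forall t, (t < D)%nat -> Rabs (x t) <= e) -> ss D x <= INR D * e^2.
Proof. induction D; intros H; cbn [ss]. simpl; lra.
  assert (Hd := H D ltac:(lia)). pose proof (IHD ltac:(intros; apply H; lia)).
  assert ((x D)^2 <= e^2).
  { rewrite <- (pow2_abs (x D)). pose proof (Rabs_pos (x D)). apply pow_incr. lra. }
  rewrite S_INR. lra. Qed.

Lemma nrm_bound (D : nat) x e : 0 <= e -> (forall t, (t < D)%nat -> Rabs (x t) <= e) -> nrm D x <= INR D * e.
Proof. intros He H. pose proof (ss_bound D x e H). unfold nrm.
  assert (HD : 0 <= INR D) by apply pos_INR.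
  destruct D. simpl. rewrite sqrt_0. lra.
  assert (1 <= INR (S D)) by (rewrite S_INR; pose proof (pos_INR D); lra).
  rewrite <- (sqrt_square (INR (S D) * e)) by nra. apply sqrt_le_1. apply ss_nonneg. nra.
  eapply Rle_trans. apply H0. nra. Qed.
Definition W (D n : nat) (P : nat -> point) (E : list (nat*nat)) (u v : nat) (L : R) :=
  exists rest, walk_ok E (u :: rest) /\ last (u :: rest) u = v /\ walk_len D P (u :: rest) <= L.

Lemma last_indep {A} (x : A) r d d' : last (x :: r) d = last (x :: r) d'.
Proof. revert x; induction r as [|a r IH]; intros x; [reflexivity|].
  change (last (a::r) d = last (a::r) d'). apply IH. Qed.

Lemma walk_len_nonneg D P r : 0 <= walk_len D P r.
Proof. induction r as [|a r IH]; simpl. lra. destruct r. lra.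
  pose proof (sqrt_pos (sqsum D (P a) (P n))). unfold Defs.dist in *. lra. Qed.

Lemma walk_app D P E u w r1 r2 :
  walk_ok E (u :: r1) -> last (u :: r1) u = w -> walk_ok E (w :: r2) ->
  walk_ok E (u :: r1 ++ r2) /\ walk_len D P (u :: r1 ++ r2) = walk_len D P (u :: r1) + walk_len D P (w :: r2)
  /\ last (u :: r1 ++ r2) u = last (w :: r2) w.
Proof.
  revert u; induction r1 as [|x r1 IH]; intros u H1 H2 H3.
  - simpl in H2. subst. simpl. split; auto. split; auto. lra.
  - change (last (u :: x :: r1) u) with (last (x :: r1) u) in H2.
    rewrite (last_indep x r1 u x) in H2.
    destruct H1 as [He H1].
    destruct (IH x H1 H2 H3) as [A [B C]].
    simpl app. split; [split; auto|]. split.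
    + change (walk_len D P (u :: x :: r1 ++ r2)) with (Defs.dist D (P u) (P x) + walk_len D P (x :: r1 ++ r2)).
      rewrite B. simpl. lra.
    + change (last (u :: x :: r1 ++ r2) u) with (last (x :: r1 ++ r2) u).
      rewrite (last_indep x _ u x). auto.
Qed.

Lemma W_trans D n P E u w v L1 L2 : W D n P E u w L1 -> W D n P E w v L2 -> W D n P E u v (L1 + L2).
Proof. intros [r1 [A1 [B1 C1]]] [r2 [A2 [B2 C2]]].
  destruct (walk_app D P E u w r1 r2 A1 B1 A2) as [A [B C]].
  exists (r1 ++ r2). split; auto. split. rewrite C; auto. rewrite B. lra. Qed.

Lemma W_refl D n P E u : W D n P E u u 0.
Proof. exists []. simpl. repeat split; lra. Qed.

Lemma W_edge D n P E u v : In (u,v) E \/ In (v,u) E -> W D n P E u v (Defs.dist D (P u) (P v)).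
Proof. intros H. exists [v]. simpl. repeat split; auto. lra. Qed.

Lemma W_mono D n P E u v L L' : L <= L' -> W D n P E u v L -> W D n P E u v L'.
Proof. intros H [r [A [B C]]]. exists r. repeat split; auto. lra. Qed.

Lemma walk_ok_sub E E' r : incl E E' -> walk_ok E r -> walk_ok E' r.
Proof. intros Hi. induction r as [|a r IH]; simpl; auto. destruct r; auto.
  intros [[H|H] H']; split; auto. Qed.

Lemma W_sub D n P E E' u v L : incl E E' -> W D n P E u v L -> W D n P E' u v L.
Proof. intros Hi [r [A [B C]]]. exists r. repeat split; auto. eapply walk_ok_sub; eauto. Qed.

Lemma dilation_W D n P E t : dilation_le D n P E t <->
  (forall u v, (u < n)%nat -> (v < n)%nat -> u <> v -> W D n P E u v (t * Defs.dist D (P u) (P v))).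
Proof. unfold dilation_le, W. tauto. Qed.

Lemma star_case D n P k s t : (2 <= n)%nat -> spread_le D n P s ->
  (forall u v, (u < n)%nat -> (v < n)%nat -> u <> v ->
     2 * s * Defs.dist D (P u) (P v) <= t * Defs.dist D (P u) (P v)) ->
  Delta_le D n P k t.
Proof.
  intros Hn Hs Ht.
  set (E := map (fun i => (i, 0%nat)) (seq 1 (n-1)) ++ repeat (1%nat, 0%nat) k).
  exists E. split; [|split].
  - unfold E. rewrite length_app, length_map, length_seq, repeat_length. lia.
  - intros e He. unfold E in He. apply in_app_or in He. destruct He as [He|He].
    + apply in_map_iff in He. destruct He as [i [<- Hi]]. apply in_seq in Hi. simpl. lia.
    + apply repeat_spec in He. subst. simpl. lia.
  - apply dilation_W. intros u v Hu Hv Huv.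
    assert (Hin : forall i, (1 <= i < n)%nat -> In (i, 0%nat) E).
    { intros i Hi. unfold E. apply in_or_app. left. apply in_map_iff. exists i. split; auto.
      apply in_seq. lia. }
    pose proof (Ht u v Hu Hv Huv) as Htuv.
    assert (Hd := dd_nonneg D (P u) (P v)).
    assert (Hsd : forall i j, (i < n)%nat -> (j < n)%nat -> i <> j ->
      Defs.dist D (P i) (P j) <= s * Defs.dist D (P u) (P v)).
    { intros i j Hi Hj Hij. apply Hs; auto. }
    assert (Hpos : 0 <= s * Defs.dist D (P u) (P v)).
    { eapply Rle_trans; [apply (dd_nonneg D (P u) (P v))|]. apply Hsd; auto. }
    destruct (Nat.eq_dec u 0) as [Hu0|Hu0]; [|destruct (Nat.eq_dec v 0) as [Hv0|Hv0]].
    + subst u. eapply W_mono; [|apply W_edge; right; apply Hin; lia].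
      pose proof (Hsd 0%nat v Hu Hv Huv). lra.
    + subst v. eapply W_mono; [|apply W_edge; left; apply Hin; lia].
      pose proof (Hsd u 0%nat Hu Hv Huv). lra.
    + eapply W_mono; [|eapply W_trans; [apply W_edge; left; apply (Hin u); lia| apply W_edge; right; apply (Hin v); lia]].
      pose proof (Hsd u 0%nat Hu ltac:(lia) Hu0). pose proof (Hsd 0%nat v ltac:(lia) Hv ltac:(lia)). lra.
Qed.

Definition fl (r : R) : nat := Z.to_nat (up r - 1).

Lemma fl_spec r : 0 <= r -> INR (fl r) <= r < INR (fl r) + 1.
Proof. intros Hr. destruct (archimed r) as [H1 H2].
  assert (Hz : (0 <= up r - 1)%Z).
  { assert (IZR 0 < IZR (up r)) by (simpl; lra). apply lt_IZR in H. lia. }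
  unfold fl. rewrite INR_IZR_INZ, Z2Nat.id by auto. rewrite minus_IZR. simpl. lra. Qed.

Lemma fl_close r r' : 0 <= r -> 0 <= r' -> fl r = fl r' -> Rabs (r - r') < 1.
Proof. intros H H' E. pose proof (fl_spec r H). pose proof (fl_spec r' H'). rewrite E in *.
  apply Rabs_def1; lra. Qed.

Lemma fl_mono r r' : 0 <= r -> r <= r' -> (fl r <= fl r')%nat.
Proof. intros H H'. pose proof (fl_spec r H). pose proof (fl_spec r' ltac:(lra)).
  assert (INR (fl r) < INR (fl r' + 1)) by (rewrite plus_INR; simpl; lra).
  apply INR_lt in H2. lia. Qed.

Fixpoint enum (d B : nat) : list (list nat) :=
  match d with
  | O => [[]]
  | S d' => flat_map (fun c => map (fun j => j :: c) (seq 0 B)) (enum d' B)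
  end.

Lemma flat_map_len_eq {A C} (f : A -> list C) l b :
  (forall x, length (f x) = b) -> length (flat_map f l) = (length l * b)%nat.
Proof. intros H; induction l; simpl; auto. rewrite length_app, H, IHl. lia. Qed.

Lemma enum_len d B : length (enum d B) = (B ^ d)%nat.
Proof. induction d; simpl; auto. rewrite (flat_map_len_eq _ _ B).
  rewrite IHd. lia. intros. rewrite length_map, length_seq. auto. Qed.

Lemma enum_in d B c : length c = d -> (forall e, In e c -> (e < B)%nat) -> In c (enum d B).
Proof. revert c; induction d; intros c Hl He.
  - destruct c; simpl in *; [auto|lia].
  - destruct c as [|x c]; simpl in Hl; [lia|]. simpl. apply in_flat_map.
    exists c. split. apply IHd; auto. intros; apply He; simpl; auto.
    apply in_map_iff. exists x. split; auto. apply in_seq. assert (x < B)%nat by (apply He; simpl; auto). lia.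
Qed.

Lemma map_eq_pt {A C} (f g : A -> C) l : map f l = map g l -> forall x, In x l -> f x = g x.
Proof. induction l; simpl; intros H x Hx; [contradiction|]. injection H; intros.
  destruct Hx; subst; auto. Qed.

Fixpoint amin (f : nat -> R) (x : nat) (l : list nat) : nat :=
  match l with
  | [] => x
  | y :: l' => amin f (if Rle_dec (f y) (f x) then y else x) l'
  end.

Lemma amin_spec f l : forall x, In (amin f x l) (x :: l) /\ forall z, In z (x :: l) -> f (amin f x l) <= f z.
Proof. induction l as [|y l IH]; intros x; simpl.
  - split; auto. intros z [<-|[]]; lra.
  - destruct (Rle_dec (f y) (f x)) as [Hle|Hle].
    + destruct (IH y) as [A B]. split. destruct A; auto.
      intros z [<-|Hz]. pose proof (B y (or_introl eq_refl)). lra. apply B. auto.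
    + destruct (IH x) as [A B]. split. destruct A as [A|A]; auto.
      intros z [<-|[<-|Hz]]. apply B; simpl; auto. pose proof (B x (or_introl eq_refl)). lra.
      apply B; simpl; auto.
Qed.

Lemma filter_split {A} (p : A -> bool) l :
  (length (filter p l) + length (filter (fun x => negb (p x)) l))%nat = length l.
Proof. induction l; simpl; auto. destruct (p a); simpl; lia. Qed.

Lemma filter_le {A} (p p' : A -> bool) l : (forall x, In x l -> p x = true -> p' x = true) ->
  (length (filter p l) <= length (filter p' l))%nat.
Proof. induction l; simpl; intros H; auto.
  destruct (p a) eqn:E. rewrite (H a (or_introl eq_refl) E). simpl.
  assert (length (filter p l) <= length (filter p' l))%nat by (apply IHl; auto). lia.
  destruct (p' a); simpl; assert (length (filter p l) <= length (filter p' l))%nat by (apply IHl; auto); lia.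
Qed.

Lemma filter_lt {A} (p p' : A -> bool) l : (forall x, In x l -> p x = true -> p' x = true) ->
  (exists x, In x l /\ p' x = true /\ p x = false) ->
  (length (filter p l) < length (filter p' l))%nat.
Proof. induction l; simpl; intros H [x [Hx [H1 H2]]]; [contradiction|].
  destruct Hx as [<-|Hx].
  - rewrite H1, H2. simpl. pose proof (filter_le p p' l ltac:(auto)). lia.
  - assert (length (filter p l) < length (filter p' l))%nat by (apply IHl; eauto).
    destruct (p a) eqn:E. rewrite (H a (or_introl eq_refl) E). simpl. lia.
    destruct (p' a); simpl; lia.
Qed.

Lemma flat_map_len_le {A C} (f : A -> list C) l b :
  (forall x, In x l -> (length (f x) <= b)%nat) -> (length (flat_map f l) <= length l * b)%nat.
Proof. induction l; simpl; intros H; auto. rewrite length_app.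
  pose proof (H a (or_introl eq_refl)). pose proof (IHl ltac:(auto)). lia. Qed.

Lemma geo (D : nat) (x y : nat -> R) : (1 <= D)%nat -> 0 < nrm D x -> nrm D x <= nrm D y ->
  (forall t, (t < D)%nat -> Rabs (x t / nrm D x - y t / nrm D y) <= / (2 * INR D)) ->
  nrm D (fun t => y t - x t) <= nrm D y - nrm D x / 2.
Proof.
  intros HD Ha Hab Hc. set (a := nrm D x) in *. set (b := nrm D y) in *.
  assert (HDr : 1 <= INR D) by (apply (le_INR 1); auto).
  assert (Hb : 0 < b) by lra.
  rewrite (nrm_ext D _ (fun t => (1 - a/b) * y t + a * (y t / b - x t / a))).
  2:{ intros. field. split; lra. }
  eapply Rle_trans; [apply nrm_triangle|].
  rewrite !nrm_scale. fold b.
  assert (H1 : Rabs (1 - a/b) = 1 - a/b).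
  { apply Rabs_right. apply Rle_ge. assert (a / b <= 1). { apply Rmult_le_reg_r with b; auto. field_simplify; lra. } lra. }
  rewrite H1. rewrite Rabs_right by lra.
  assert (H2 : nrm D (fun t => y t / b - x t / a) <= INR D * / (2 * INR D)).
  { apply nrm_bound. apply Rlt_le, Rinv_0_lt_compat; lra.
    intros t Ht. rewrite Rabs_minus_sym. apply Hc; auto. }
  replace (INR D * / (2 * INR D)) with (/2) in H2 by (field; lra).
  replace ((1 - a / b) * b) with (b - a) by (field; lra).
  pose proof (nrm_nonneg D (fun t => y t / b - x t / a)). nra.
Qed.



Definition cone (D : nat) (P : nat -> point) (u w : nat) : list nat :=
  map (fun t => fl (INR (2*D) * vsub (P w) (P u) t / nrm D (vsub (P w) (P u)) + INR (2*D))) (seq 0 D).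

Definition ceqb (c c' : list nat) : bool := if list_eq_dec Nat.eq_dec c c' then true else false.

Definition cands D n P (isr : nat -> bool) u c :=
  filter (fun w => (isr w && negb (Nat.eqb w u) && ceqb (cone D P u w) c)%bool) (seq 0 n).

Definition yao D n P isr u c : list (nat * nat) :=
  match cands D n P isr u c with
  | [] => []
  | w :: l => [(u, amin (fun z => Defs.dist D (P u) (P z)) w l)]
  end.

Definition Eyao D n P isr :=
  flat_map (fun u => flat_map (yao D n P isr u) (enum D (4*D+1))) (filter isr (seq 0 n)).

Lemma cands_spec D n P isr u c w : In w (cands D n P isr u c) <->
  (w < n)%nat /\ isr w = true /\ w <> u /\ cone D P u w = c.
Proof. unfold cands. rewrite filter_In, in_seq. unfold ceqb.
  destruct (list_eq_dec Nat.eq_dec (cone D P u w) c); destruct (isr w); destruct (Nat.eqb_spec w u);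
  simpl; intuition lia. Qed.

Lemma Eyao_wf D n P isr e : In e (Eyao D n P isr) -> (fst e < n)%nat /\ (snd e < n)%nat /\ fst e <> snd e.
Proof. unfold Eyao. intros H. apply in_flat_map in H. destruct H as [u [Hu H]].
  apply filter_In in Hu. destruct Hu as [Hu _]. apply in_seq in Hu.
  apply in_flat_map in H. destruct H as [c [_ H]]. unfold yao in H.
  destruct (cands D n P isr u c) as [|w l] eqn:Ec; [contradiction|].
  destruct H as [<-|[]]. simpl.
  destruct (amin_spec (fun z => Defs.dist D (P u) (P z)) l w) as [Hin _].
  rewrite <- Ec in Hin. apply cands_spec in Hin. lia. Qed.

Lemma Eyao_len D n P isr : (length (Eyao D n P isr) <= length (filter isr (seq 0 n)) * (4*D+1)^D)%nat.
Proof. unfold Eyao. apply flat_map_len_le. intros u _.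
  rewrite <- (enum_len D (4*D+1)). replace (length (enum D (4 * D + 1))) with (length (enum D (4 * D + 1)) * 1)%nat by lia.
  apply flat_map_len_le. intros c _. unfold yao. destruct (cands D n P isr u c); simpl; lia. Qed.

Lemma cone_arg D (x : nat -> R) t : (t < D)%nat -> 0 < nrm D x ->
  0 <= INR (2*D) * x t / nrm D x + INR (2*D) <= INR (4*D).
Proof. intros Ht Hx. pose proof (coord_le D x t Ht).
  assert (Hm : 0 <= INR (2*D)) by apply pos_INR.
  assert (H4 : INR (4*D) = 2 * INR (2*D)) by (rewrite !mult_INR; simpl; lra).
  assert (-1 <= x t / nrm D x <= 1).
  { assert (Rabs (x t / nrm D x) <= 1).
    { unfold Rdiv. rewrite Rabs_mult, Rabs_inv, (Rabs_right (nrm D x)) by lra.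
      apply Rmult_le_reg_r with (nrm D x); auto. field_simplify; lra. }
    revert H0. generalize (x t / nrm D x). intros z. unfold Rabs. destruct Rcase_abs; lra. }
  unfold Rdiv in *. rewrite Rmult_assoc. nra. Qed.

Lemma cone_in D P u w : 0 < nrm D (vsub (P w) (P u)) -> In (cone D P u w) (enum D (4*D+1)).
Proof. intros Hp. apply enum_in. unfold cone. rewrite length_map, length_seq; auto.
  intros e He. unfold cone in He. apply in_map_iff in He. destruct He as [t [<- Ht]].
  apply in_seq in Ht. destruct (cone_arg D (vsub (P w) (P u)) t ltac:(lia) Hp) as [A B].
  pose proof (fl_spec _ A) as [C _].
  assert (INR (fl (INR (2 * D) * vsub (P w) (P u) t / nrm D (vsub (P w) (P u)) + INR (2 * D))) <= INR (4*D)) by lra.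
  apply INR_le in H. lia. Qed.

Lemma cone_close D P u w v : (1 <= D)%nat -> 0 < nrm D (vsub (P w) (P u)) -> 0 < nrm D (vsub (P v) (P u)) ->
  cone D P u w = cone D P u v -> forall t, (t < D)%nat ->
  Rabs (vsub (P w) (P u) t / nrm D (vsub (P w) (P u)) - vsub (P v) (P u) t / nrm D (vsub (P v) (P u))) <= / (2 * INR D).
Proof. intros HD Hw Hv Hc t Ht.
  unfold cone in Hc. pose proof (map_eq_pt _ _ _ Hc t ltac:(apply in_seq; lia)) as E. simpl in E.
  destruct (cone_arg D _ t Ht Hw) as [A _]. destruct (cone_arg D _ t Ht Hv) as [B _].
  pose proof (fl_close _ _ A B E) as F.
  assert (HDr : 1 <= INR D) by (apply (le_INR 1); auto).
  rewrite mult_INR in F. replace (INR 2) with 2 in F by (simpl; lra).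
  set (p := vsub (P w) (P u) t / nrm D (vsub (P w) (P u))) in *.
  set (q := vsub (P v) (P u) t / nrm D (vsub (P v) (P u))) in *.
  replace (2 * INR D * vsub (P w) (P u) t / nrm D (vsub (P w) (P u)) + 2 * INR D -
      (2 * INR D * vsub (P v) (P u) t / nrm D (vsub (P v) (P u)) + 2 * INR D)) with ((2 * INR D) * (p - q)) in F
    by (unfold p, q; field; lra).
rewrite Rabs_mult, Rabs_right in F by lra.
  apply Rmult_le_reg_l with (2 * INR D). lra. rewrite Rinv_r by lra. lra. Qed.

Definition meas D n P u v : nat :=
  length (filter (fun ab => if Rlt_dec (Defs.dist D (P (fst ab)) (P (snd ab))) (Defs.dist D (P u) (P v)) then true else false)
    (list_prod (seq 0 n) (seq 0 n))).

Lemma yao_dil D n P isr (dl : R) : (1 <= D)%nat -> 0 < dl ->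
  (forall i j, (i < n)%nat -> (j < n)%nat -> i <> j -> dl <= Defs.dist D (P i) (P j)) ->
  forall u v, (u < n)%nat -> (v < n)%nat -> isr u = true -> isr v = true -> u <> v ->
  W D n P (Eyao D n P isr) u v (2 * Defs.dist D (P u) (P v)).
Proof.
  intros HD Hdl Hsep.
  assert (Hall : forall N u v, meas D n P u v = N -> (u < n)%nat -> (v < n)%nat -> isr u = true -> isr v = true -> u <> v ->
    W D n P (Eyao D n P isr) u v (2 * Defs.dist D (P u) (P v))).
  2:{ intros; eapply Hall; eauto. }
  intro N. induction N as [N IH] using (well_founded_induction Wf_nat.lt_wf).
  intros u v HN Hu Hv Hru Hrv Huv.
  set (c := cone D P u v).
  assert (Hvin : In v (cands D n P isr u c)) by (apply cands_spec; auto).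
  destruct (cands D n P isr u c) as [|w0 l] eqn:Ec; [contradiction|].
  set (f := fun z => Defs.dist D (P u) (P z)).
  destruct (amin_spec f l w0) as [Hwin Hwmin].
  set (w := amin f w0 l) in *.
  assert (Hw := Hwin). rewrite <- Ec in Hw. apply cands_spec in Hw. destruct Hw as [Hwn [Hrw [Hwu Hcw]]].
  assert (Hfw : f w <= f v) by (apply Hwmin; auto). unfold f in Hfw.
  assert (Hnv : 0 < nrm D (vsub (P v) (P u))).
  { rewrite <- dist_nrm. pose proof (Hsep v u Hv Hu (not_eq_sym Huv)). lra. }
  assert (Hnw : 0 < nrm D (vsub (P w) (P u))).
  { rewrite <- dist_nrm. pose proof (Hsep w u Hwn Hu Hwu). lra. }
  assert (Hedge : In (u, w) (Eyao D n P isr)).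
  { unfold Eyao. apply in_flat_map. exists u. split. apply filter_In; split; auto. apply in_seq; lia.
    apply in_flat_map. exists c. split. apply (cone_in D P u v Hnv).
    unfold yao. rewrite Ec. left. reflexivity. }
  destruct (Nat.eq_dec w v) as [Hwv|Hwv].
  - rewrite Hwv in Hedge. eapply W_mono; [|apply W_edge; left; exact Hedge].
    pose proof (dd_nonneg D (P u) (P v)). lra.
  - assert (Hg := geo D (vsub (P w) (P u)) (vsub (P v) (P u)) HD Hnw).
    rewrite <- !dist_nrm in Hg. rewrite (dd_sym D (P w) (P u)), (dd_sym D (P v) (P u)) in Hg.
    specialize (Hg Hfw).
    assert (Hcl := cone_close D P u w v HD Hnw Hnv Hcw).
    rewrite <- !dist_nrm in Hcl. rewrite (dd_sym D (P w) (P u)), (dd_sym D (P v) (P u)) in Hcl.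
    specialize (Hg Hcl).
    assert (Hwv' : Defs.dist D (P w) (P v) <= Defs.dist D (P u) (P v) - Defs.dist D (P u) (P w) / 2).
    { eapply Rle_trans; [|exact Hg]. rewrite dd_sym, dist_nrm. right. apply nrm_ext.
      intros. unfold vsub. ring. }
    assert (Huw : dl <= Defs.dist D (P u) (P w)) by (apply Hsep; auto).
    assert (Hlt : (meas D n P w v < meas D n P u v)%nat).
    { unfold meas. apply filter_lt.
      - intros [a b] _. simpl. destruct (Rlt_dec _ (Defs.dist D (P w) (P v))); [|discriminate].
        destruct (Rlt_dec _ (Defs.dist D (P u) (P v))); auto. lra.
      - exists (w, v). split. apply in_prod; apply in_seq; lia. simpl.
        destruct (Rlt_dec (Defs.dist D (P w) (P v)) (Defs.dist D (P u) (P v))); [|lra].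
        destruct (Rlt_dec (Defs.dist D (P w) (P v)) (Defs.dist D (P w) (P v))); [lra|]. auto. }
    assert (IHw := IH (meas D n P w v) ltac:(lia) w v eq_refl Hwn Hv Hrw Hrv Hwv).
    eapply W_mono; [|eapply W_trans; [apply W_edge; left; exact Hedge| exact IHw]].
    lra.
Qed.

Definition cell D (P : nat -> point) (Dl h : R) (j : nat) : list nat :=
  map (fun t => fl ((P j t - P 0%nat t + Dl) / h)) (seq 0 D).

Lemma cell_arg D n P Dl h j t : (forall i, (i < n)%nat -> Defs.dist D (P 0%nat) (P i) <= Dl) -> 0 < h ->
  (j < n)%nat -> (t < D)%nat -> 0 <= (P j t - P 0%nat t + Dl) / h <= 2 * Dl / h.
Proof. intros HB Hh Hj Ht. pose proof (HB j Hj) as Hd. rewrite dd_sym, dist_nrm in Hd.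
  pose proof (coord_le D (vsub (P j) (P 0%nat)) t Ht) as Hc. change (vsub (P j) (P 0%nat) t) with (P j t - P 0%nat t) in Hc.
  assert (-Dl <= P j t - P 0%nat t <= Dl).
  { revert Hc. generalize (P j t - P 0%nat t). intros z. unfold Rabs; destruct Rcase_abs; lra. }
  assert (0 <= / h) by (apply Rlt_le, Rinv_0_lt_compat; lra).
  split; unfold Rdiv. apply Rmult_le_pos; lra. apply Rmult_le_compat_r; lra. Qed.

Lemma cell_in D n P Dl h j : (forall i, (i < n)%nat -> Defs.dist D (P 0%nat) (P i) <= Dl) -> 0 < h ->
  (j < n)%nat -> In (cell D P Dl h j) (enum D (fl (2 * Dl / h) + 1)).
Proof. intros HB Hh Hj. apply enum_in. unfold cell. rewrite length_map, length_seq; auto.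
  intros e He. apply in_map_iff in He. destruct He as [t [<- Ht]]. apply in_seq in Ht.
  destruct (cell_arg D n P Dl h j t HB Hh Hj ltac:(lia)) as [A B].
  pose proof (fl_mono _ _ A B). lia. Qed.

Lemma cell_close D n P Dl h i j : (forall i, (i < n)%nat -> Defs.dist D (P 0%nat) (P i) <= Dl) -> 0 < h ->
  (i < n)%nat -> (j < n)%nat -> cell D P Dl h i = cell D P Dl h j -> Defs.dist D (P i) (P j) <= INR D * h.
Proof. intros HB Hh Hi Hj E. rewrite dist_nrm. apply nrm_bound. lra.
  intros t Ht. unfold cell in E. pose proof (map_eq_pt _ _ _ E t ltac:(apply in_seq; lia)) as F. simpl in F.
  destruct (cell_arg D n P Dl h i t HB Hh Hi Ht) as [A _].
  destruct (cell_arg D n P Dl h j t HB Hh Hj Ht) as [B _].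
  pose proof (fl_close _ _ A B F) as G.
  replace ((P i t - P 0%nat t + Dl) / h - (P j t - P 0%nat t + Dl) / h) with (vsub (P i) (P j) t / h) in G
    by (unfold vsub; field; lra).
  unfold Rdiv in G. rewrite Rabs_mult, (Rabs_right (/h)) in G by (apply Rle_ge, Rlt_le, Rinv_0_lt_compat; lra).
  apply Rmult_lt_compat_r with (r := h) in G; auto. rewrite Rmult_assoc, Rinv_l, Rmult_1_r in G by lra. lra. Qed.

Lemma cell_count D n P Dl h (l : list nat) : 0 <= Dl -> (forall i, (i < n)%nat -> Defs.dist D (P 0%nat) (P i) <= Dl) -> 0 < h ->
  NoDup l -> (forall a, In a l -> (a < n)%nat) ->
  (forall a b, In a l -> In b l -> cell D P Dl h a = cell D P Dl h b -> a = b) ->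
  INR (length l) <= (2 * Dl / h + 1) ^ D.
Proof. intros HDl HB Hh Hnd Hl Hinj.
  assert (H1 : (length l <= (fl (2 * Dl / h) + 1) ^ D)%nat).
  { replace (length l) with (length (map (cell D P Dl h) l)) by apply length_map. rewrite <- enum_len. apply NoDup_incl_length.
    apply NoDup_map_NoDup_ForallPairs; [intros a b Ha Hb; apply Hinj; auto | auto].
    intros c Hc. apply in_map_iff in Hc. destruct Hc as [a [<- Ha]]. apply (cell_in D n); auto. }
  apply le_INR in H1. eapply Rle_trans; [exact H1|]. rewrite pow_INR.
  assert (0 <= 2 * Dl / h).
  { unfold Rdiv. apply Rmult_le_pos; [lra|]. apply Rlt_le, Rinv_0_lt_compat; lra. }
  apply pow_incr. split. apply pos_INR. pose proof (fl_spec _ H). rewrite plus_INR. simpl. lra.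
Qed.

Lemma pow_lt_mono x y n : 0 <= x < y -> (1 <= n)%nat -> x ^ n < y ^ n.
Proof. intros H Hn. destruct n as [|m]; [lia|]. simpl.
  assert (x ^ m <= y ^ m) by (apply pow_incr; lra).
  assert (0 < y ^ m) by (apply pow_lt; lra).
  assert (0 <= x ^ m) by (apply pow_le; lra). nra. Qed.

Lemma dd_refl D p : Defs.dist D p p = 0.
Proof. rewrite dist_nrm. unfold nrm. rewrite (ss_ext D _ (fun _ => 0)).
  2:{ intros; unfold vsub; ring. }
  replace (ss D (fun _ => 0)) with 0. apply sqrt_0.
  induction D; simpl; auto. rewrite <- IHD. ring. Qed.

Definition rep D n P Dl h j := hd 0%nat (filter (fun i => ceqb (cell D P Dl h i) (cell D P Dl h j)) (seq 0 n)).
Definition isr D n P Dl h j := Nat.eqb (rep D n P Dl h j) j.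

Lemma rep_spec D n P Dl h j : (j < n)%nat -> (rep D n P Dl h j < n)%nat /\ cell D P Dl h (rep D n P Dl h j) = cell D P Dl h j.
Proof. intros Hj. unfold rep.
  assert (Hin : In j (filter (fun i => ceqb (cell D P Dl h i) (cell D P Dl h j)) (seq 0 n))).
  { apply filter_In. split. apply in_seq; lia. unfold ceqb. destruct list_eq_dec; auto. }
  destruct (filter (fun i => ceqb (cell D P Dl h i) (cell D P Dl h j)) (seq 0 n)) as [|x l] eqn:E; [contradiction|].
  simpl. assert (Hx : In x (filter (fun i => ceqb (cell D P Dl h i) (cell D P Dl h j)) (seq 0 n))) by (rewrite E; left; auto).
  apply filter_In in Hx. destruct Hx as [A B]. apply in_seq in A. unfold ceqb in B.
  destruct list_eq_dec; [|discriminate]. split; auto; lia. Qed.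

Lemma rep_eq D n P Dl h i j : cell D P Dl h i = cell D P Dl h j -> rep D n P Dl h i = rep D n P Dl h j.
Proof. intros E. unfold rep. rewrite E. auto. Qed.

Lemma rep_isr D n P Dl h j : (j < n)%nat -> isr D n P Dl h (rep D n P Dl h j) = true.
Proof. intros Hj. unfold isr. apply Nat.eqb_eq. apply rep_eq. apply rep_spec; auto. Qed.

Definition NCc (D : nat) : nat := ((4*D+1)^D)%nat.
Definition btc (D : nat) : R := 2 * INR (NCc D).

Lemma caseB D n P k s dl q : (2 <= D)%nat -> (2 <= n)%nat -> (k < n)%nat -> 0 < dl -> 1 <= s ->
  (forall i j, (i < n)%nat -> (j < n)%nat -> i <> j -> dl <= Defs.dist D (P i) (P j)) ->
  (forall i j, (i < n)%nat -> (j < n)%nat -> i <> j -> Defs.dist D (P i) (P j) <= s * dl) ->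
  0 < q -> q ^ D = INR (k + 1) -> 17 * btc D * INR D < q ->
  Delta_le D n P k (34 * btc D * INR D * s / q).
Proof.
  intros HD Hn Hk Hdl Hs Hmin Hmax Hq0 HqD Hq.
  set (bt := btc D) in *. set (NC := NCc D) in *.
  set (Dl := s * dl). assert (HDl : 0 < Dl) by (unfold Dl; nra).
  assert (HB : forall i, (i < n)%nat -> Defs.dist D (P 0%nat) (P i) <= Dl).
  { intros i Hi. destruct (Nat.eq_dec i 0) as [->|Hi0]. rewrite dd_refl; lra. apply Hmax; lia. }
  assert (HNC : 1 <= INR NC).
  { apply (le_INR 1). unfold NC, NCc. pose proof (Nat.pow_nonzero (4*D+1) D ltac:(lia)). lia. }
  assert (Hbt : 2 <= bt) by (unfold bt, btc; fold NC; lra).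
  assert (HDr : 2 <= INR D) by (apply (le_INR 2); auto).
  set (h0 := dl / (2 * INR D)).
  assert (Hh0 : 0 < h0) by (unfold h0; apply Rdiv_lt_0_compat; lra).
  assert (Hpack : INR (length (seq 0 n)) <= (2 * Dl / h0 + 1) ^ D).
  { apply (cell_count D n P Dl h0); auto. lra. apply seq_NoDup. intros a Ha; apply in_seq in Ha; lia.
    intros a b Ha Hb E. apply in_seq in Ha. apply in_seq in Hb.
    destruct (Nat.eq_dec a b) as [|Hab]; auto. exfalso.
    pose proof (cell_close D n P Dl h0 a b HB Hh0 ltac:(lia) ltac:(lia) E).
    pose proof (Hmin a b ltac:(lia) ltac:(lia) Hab).
    assert (INR D * h0 = dl / 2) by (unfold h0; field; lra). lra. }
  rewrite length_seq in Hpack.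
  replace (2 * Dl / h0) with (4 * INR D * s) in Hpack by (unfold h0, Dl; field; lra).
  assert (Hpack2 : INR n <= (5 * INR D * s) ^ D).
  { eapply Rle_trans; [exact Hpack|]. apply pow_incr. nra. }
  assert (HKn : q ^ D <= INR n) by (rewrite HqD; apply le_INR; lia).
  assert (Hq5 : q <= 5 * INR D * s).
  { destruct (Rle_or_lt q (5 * INR D * s)) as [|Hc]; auto. exfalso.
    assert ((5 * INR D * s) ^ D < q ^ D) by (apply pow_lt_mono; [split; [nra|auto]|lia]). lra. }
  set (h := 4 * bt * Dl / q).
  assert (Hh : 0 < h) by (unfold h; apply Rdiv_lt_0_compat; nra).
  set (isr' := isr D n P Dl h). set (rp := rep D n P Dl h).
  set (m := length (filter isr' (seq 0 n))).
  assert (Hm : INR m <= (2 * Dl / h + 1) ^ D).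
  { apply (cell_count D n P Dl h); auto. lra. apply NoDup_filter, seq_NoDup.
    intros a Ha; apply filter_In in Ha; destruct Ha as [Ha _]; apply in_seq in Ha; lia.
    intros a b Ha Hb E. apply filter_In in Ha. apply filter_In in Hb.
    destruct Ha as [_ Ha]. destruct Hb as [_ Hb]. unfold isr', isr in Ha, Hb.
    apply Nat.eqb_eq in Ha. apply Nat.eqb_eq in Hb. rewrite <- Ha, <- Hb. apply rep_eq; auto. }
  replace (2 * Dl / h) with (q / (2 * bt)) in Hm by (unfold h; field; lra).
  assert (Hm2 : INR m * bt <= INR (k + 1)).
  { rewrite <- HqD.
    assert (bt <= bt ^ D) by (rewrite <- (pow_1 bt) at 1; apply Rle_pow; lia || lra).
    assert (INR m * bt ^ D <= q ^ D).
    { assert (INR m * bt ^ D <= (q / (2 * bt) + 1) ^ D * bt ^ D).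
      { apply Rmult_le_compat_r; auto. apply pow_le; lra. }
      rewrite <- Rpow_mult_distr in H0. eapply Rle_trans; [exact H0|]. apply pow_incr.
      split. apply Rmult_le_pos; [|lra]. apply Rplus_le_le_0_compat; [|lra]. apply Rlt_le, Rdiv_lt_0_compat; lra.
      replace ((q / (2 * bt) + 1) * bt) with (q / 2 + bt) by (field; lra). nra. }
    pose proof (pos_INR m). nra. }
  assert (Hk1 : (1 <= k)%nat).
  { assert (1 < q ^ D) by (apply Rlt_pow_R1; [nra|lia]). rewrite HqD in H.
    assert (INR 1 < INR (k+1)) by (simpl; lra). apply INR_lt in H0. lia. }
  assert (HmNC : (m * NC <= k)%nat).
  { assert (INR (2 * (m * NC)) <= INR (k + 1)).
    { rewrite !mult_INR. unfold bt, btc in Hm2. fold NC in Hm2. simpl INR. lra. }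
    apply INR_le in H. lia. }
  assert (Hm1 : (1 <= m)%nat).
  { unfold m. assert (In (rp 0%nat) (filter isr' (seq 0 n))).
    { apply filter_In. split. apply in_seq. pose proof (rep_spec D n P Dl h 0 ltac:(lia)). fold rp in H. lia.
      apply rep_isr. lia. }
    destruct (filter isr' (seq 0 n)); simpl in *; [contradiction|lia]. }
  set (Estar := map (fun i => (i, rp i)) (filter (fun i => negb (isr' i)) (seq 0 n))).
  set (E0 := Estar ++ Eyao D n P isr').
  assert (HE0 : (length E0 <= n - 1 + k)%nat).
  { unfold E0, Estar. rewrite length_app, length_map.
    pose proof (filter_split isr' (seq 0 n)). rewrite length_seq in H.
    pose proof (Eyao_len D n P isr'). fold m in H, H0. fold (NCc D) in H0. fold NC in H0.
    lia. }
  exists (E0 ++ repeat (0%nat, 1%nat) (n - 1 + k - length E0)). split; [|split].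
  - rewrite length_app, repeat_length. lia.
  - intros e He. apply in_app_or in He. destruct He as [He|He].
    + unfold E0 in He. apply in_app_or in He. destruct He as [He|He].
      * unfold Estar in He. apply in_map_iff in He. destruct He as [i [<- Hi]].
        apply filter_In in Hi. destruct Hi as [Hi Hr]. apply in_seq in Hi. simpl.
        pose proof (rep_spec D n P Dl h i ltac:(lia)) as [A _]. fold rp in A.
        unfold isr', isr in Hr. fold rp in Hr. destruct (Nat.eqb_spec (rp i) i); simpl in Hr; [discriminate|].
        lia.
      * apply Eyao_wf in He. auto.
    + apply repeat_spec in He. subst. simpl. lia.
  - apply dilation_W. intros u v Hu Hv Huv.
    apply W_sub with E0; [apply incl_appl, incl_refl|].
    assert (HDh : 0 <= INR D * h) by nra.
    assert (Hclose : forall j, (j < n)%nat -> Defs.dist D (P j) (P (rp j)) <= INR D * h).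
    { intros j Hj. pose proof (rep_spec D n P Dl h j Hj) as [A B]. fold rp in A, B.
      apply (cell_close D n P Dl h); auto. }
    assert (Hto : forall j, (j < n)%nat -> W D n P E0 j (rp j) (INR D * h)).
    { intros j Hj. destruct (isr' j) eqn:I.
      - unfold isr', isr in I. fold rp in I. apply Nat.eqb_eq in I. rewrite I.
        eapply W_mono; [|apply W_refl]. auto.
      - apply W_mono with (L := Defs.dist D (P j) (P (rp j))); [apply Hclose; auto|]. apply W_edge. left. unfold E0. apply in_or_app. left.
        unfold Estar. apply in_map_iff. exists j. split; auto. apply filter_In. split. apply in_seq; lia.
        rewrite I. auto. }
    assert (Hfrom : forall j, (j < n)%nat -> W D n P E0 (rp j) j (INR D * h)).
    { intros j Hj. destruct (isr' j) eqn:I.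
      - unfold isr', isr in I. fold rp in I. apply Nat.eqb_eq in I. rewrite I.
        eapply W_mono; [|apply W_refl]. auto.
      - apply W_mono with (L := Defs.dist D (P (rp j)) (P j)); [rewrite dd_sym; apply Hclose; auto|]. apply W_edge. right. unfold E0. apply in_or_app. left.
        unfold Estar. apply in_map_iff. exists j. split; auto. apply filter_In. split. apply in_seq; lia.
        rewrite I. auto. }
    set (d := Defs.dist D (P u) (P v)).
    assert (Hd : dl <= d) by (apply Hmin; auto).
    assert (Hmid : W D n P E0 (rp u) (rp v) (4 * (INR D * h) + 2 * d)).
    { destruct (Nat.eq_dec (rp u) (rp v)) as [E|E].
      - rewrite E. eapply W_mono; [|apply W_refl]. lra.
      - pose proof (rep_spec D n P Dl h u Hu) as [Au _]. pose proof (rep_spec D n P Dl h v Hv) as [Av _].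
        fold rp in Au, Av.
        assert (Y := yao_dil D n P isr' dl ltac:(lia) Hdl Hmin (rp u) (rp v) Au Av
                 (rep_isr D n P Dl h u Hu) (rep_isr D n P Dl h v Hv) E).
        apply W_sub with (E' := E0) in Y; [|apply incl_appr, incl_refl].
        eapply W_mono; [|exact Y].
        pose proof (dd_tri D (P (rp u)) (P u) (P (rp v))).
        pose proof (dd_tri D (P u) (P v) (P (rp v))).
        pose proof (Hclose u Hu). pose proof (Hclose v Hv). rewrite dd_sym in H1. fold d in H0. lra. }
    eapply W_mono; [|eapply W_trans; [eapply W_trans; [apply Hto; auto|exact Hmid]|apply Hfrom; auto]].
    assert (Hdh : INR D * h <= 4 * bt * INR D * s * d / q).
    { unfold h, Dl. unfold Rdiv. 
      assert (0 <= bt * INR D * s * / q) by (apply Rmult_le_pos; [nra|apply Rlt_le, Rinv_0_lt_compat; lra]).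
      replace (INR D * (4 * bt * (s * dl) * / q)) with (4 * (bt * INR D * s * / q) * dl) by ring.
      replace (4 * bt * INR D * s * d * / q) with (4 * (bt * INR D * s * / q) * d) by ring. nra. }
    assert (H2d : 2 * d <= 10 * bt * INR D * s * d / q).
    { assert (0 <= d) by lra.
      assert (1 <= 5 * INR D * s / q) by (apply Rmult_le_reg_r with q; auto; field_simplify; lra).
      replace (10 * bt * INR D * s * d / q) with (2 * bt * d * (5 * INR D * s / q)) by (field; lra).
      assert (0 <= 2*bt*d) by nra.
      assert (2*bt*d*1 <= 2*bt*d*(5 * INR D * s / q)) by (apply Rmult_le_compat_l; lra).
      assert (2*d <= 2*bt*d) by nra. lra. }
    replace (34 * bt * INR D * s / q * d) with (6 * (4 * bt * INR D * s * d / q) + 10 * bt * INR D * s * d / q)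
      by (field; lra).
    lra.
Qed.

Lemma exists_min {A} (f : A -> R) (l : list A) x0 : In x0 l -> exists x, In x l /\ forall y, In y l -> f x <= f y.
Proof. revert x0. induction l as [|a l IH]; intros x0 H; [contradiction|].
  destruct l as [|b l'].
  - exists a. split; [left; auto|]. intros y [<-|[]]; lra.
  - destruct (IH b (or_introl eq_refl)) as [x [Hx Hm]].
    destruct (Rle_dec (f a) (f x)).
    + exists a. split; [left; auto|]. intros y [<-|Hy]; [lra|]. specialize (Hm y Hy). lra.
    + exists x. split; [right; auto|]. intros y [<-|Hy]; [lra|]. auto.
Qed.

Theorem theorem6 :
  forall D : nat, (2 <= D)%nat ->
  exists C : R, 0 < C /\
    forall (n : nat) (s : R) (k : nat), (2 <= n)%nat -> (k < n)%nat ->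
    forall P : nat -> point,
      distinct_points n P -> spread_le D n P s ->
      Delta_le D n P k (C * s / Rpower (INR (k + 1)) (/ INR D)).
Proof.
  intros D HD.
  assert (HDr : 2 <= INR D) by (apply (le_INR 2); auto).
  assert (HNC : 1 <= INR (NCc D)).
  { apply (le_INR 1). unfold NCc. pose proof (Nat.pow_nonzero (4*D+1) D ltac:(lia)). lia. }
  assert (Hbt : 2 <= btc D) by (unfold btc; lra).
  exists (34 * btc D * INR D). split. nra.
  intros n s k Hn Hk P _ Hs.
  set (q := Rpower (INR (k + 1)) (/ INR D)).
  assert (HK : 0 < INR (k + 1)) by (apply lt_0_INR; lia).
  assert (Hq0 : 0 < q) by (unfold q, Rpower; apply exp_pos).
  assert (HqD : q ^ D = INR (k + 1)).
  { rewrite <- Rpower_pow by auto. unfold q. rewrite Rpower_mult.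
    rewrite Rinv_l by lra. apply Rpower_1; auto. }
  set (pairs := filter (fun ab => negb (Nat.eqb (fst ab) (snd ab))) (list_prod (seq 0 n) (seq 0 n))).
  assert (Hp01 : In (0%nat, 1%nat) pairs).
  { apply filter_In. split. apply in_prod; apply in_seq; lia. auto. }
  destruct (exists_min (fun ab => Defs.dist D (P (fst ab)) (P (snd ab))) pairs _ Hp01) as [[a b] [Hab Hmin0]].
  apply filter_In in Hab. destruct Hab as [Hab Hneq]. apply in_prod_iff in Hab. destruct Hab as [Ha Hb].
  apply in_seq in Ha. apply in_seq in Hb. simpl in Hneq. destruct (Nat.eqb_spec a b) as [|Hne]; [discriminate|].
  simpl in Hmin0.
  set (dl := Defs.dist D (P a) (P b)).
  assert (Hmin : forall i j, (i < n)%nat -> (j < n)%nat -> i <> j -> dl <= Defs.dist D (P i) (P j)).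
  { intros i j Hi Hj Hij. apply (Hmin0 (i, j)). apply filter_In. split. apply in_prod; apply in_seq; lia.
    simpl. destruct (Nat.eqb_spec i j); auto. }
  assert (Hmax : forall i j, (i < n)%nat -> (j < n)%nat -> i <> j -> Defs.dist D (P i) (P j) <= s * dl).
  { intros i j Hi Hj Hij. apply Hs; auto; lia. }
  assert (Hdl0 : 0 <= dl) by apply dd_nonneg.
  destruct (Req_dec dl 0) as [Hz|Hnz].
  - apply star_case with s; auto. intros u v Hu Hv Huv.
    pose proof (Hmax u v Hu Hv Huv). rewrite Hz in H. pose proof (dd_nonneg D (P u) (P v)).
    assert (Defs.dist D (P u) (P v) = 0) by lra. rewrite H1. lra.
  - assert (Hdl : 0 < dl) by lra.
    assert (Hs1 : 1 <= s).
    { pose proof (Hmax a b ltac:(lia) ltac:(lia) Hne). fold dl in H.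
      apply Rmult_le_reg_r with dl; auto. lra. }
    destruct (Rle_or_lt q (17 * btc D * INR D)) as [Hsmall|Hbig].
    + apply star_case with s; auto. intros u v Hu Hv Huv.
      pose proof (dd_nonneg D (P u) (P v)).
      apply Rmult_le_compat_r; auto.
      assert (2 <= 34 * btc D * INR D / q).
      { apply Rmult_le_reg_r with q; auto. field_simplify; lra. }
      replace (34 * btc D * INR D * s / q) with (s * (34 * btc D * INR D / q)) by (field; lra). nra.
    + apply (caseB D n P k s dl q); auto.
Qed.
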